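(* Let $\mathcal{R}$ be the universal $R$-matrix of $U_q(\mathfrak{su}_2)$, $\mu=q^{2H}$, and $Q=(q-q^{-1})^2FE+q^{2H+1}+q^{-2H-1}$. Then $$\mathrm{Tr}_1^{(1/2)}\big(\mathcal{R}_{21}\mathcal{R}_{31}\mathcal{R}_{13}\mathcal{R}_{12}(\mu\otimes1\otimes1)\big)=\Delta(Q),$$ where $\mathrm{Tr}_1^{(1/2)}$ means representing the first tensor factor in the spin-$1/2$ representation and tracing over it.
   Context: $q$ generic complex, $U_q(\mathfrak{su}_2)$ generated by $E,F,q^H$ with $q^HE=qEq^H$, $q^HF=q^{-1}Fq^H$, $[E,F]=[2H]_q$, $[x]_q=(q^x-q^{-x})/(q-q^{-1})$; coproduct $\Delta(E)=E\otimes q^{-H}+q^H\otimes E$, $\Delta(F)=F\otimes q^{-H}+q^H\otimes F$, $\Delta(q^H)=q^H\otimes q^H$. $\mathcal{R}=\sum_{k\ge0}\frac{(q-q^{-1})^k}{[k]_q!}q^{-k(k+1)/2}(F\otimes E)^k(q^{kH}\otimes q^{-kH})q^{2(H\otimes H)}=\mathcal{R}^\alpha\otimes\mathcal{R}_\alpha$; leg notation: $\mathcal{R}_{12}=\mathcal{R}^\alpha\otimes\mathcal{R}_\alpha\otimes1$, $\mathcal{R}_{13}=\mathcal{R}^\alpha\otimes1\otimes\mathcal{R}_\alpha$, $\mathcal{R}_{21}=\mathcal{R}_\alpha\otimes\mathcal{R}^\alpha\otimes1$, $\mathcal{R}_{31}=\mathcal{R}_\alpha\otimes1\otimes\mathcal{R}^\alpha$.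 Spin-$1/2$ representation: basis $|1/2,\pm1/2\rangle$ with $E|1/2,m\rangle=[1/2-m]_q|1/2,m+1\rangle$, $F|1/2,m\rangle=[1/2+m]_q|1/2,m-1\rangle$, $H|1/2,m\rangle=m|1/2,m\rangle$. Equalities are understood as operators on tensor products of finite-dimensional spin representations. *)

(* Defs.v *)
From mathcomp Require Import all_boot all_order all_algebra all_field.
Set Implicit Arguments.
Unset Strict Implicit.
Unset Printing Implicit Defensive.
Import Order.TTheory GRing.Theory Num.Theory.
Local Open Scope ring_scope.

(* We parametrize by s = q^(1/2) (q = s^2), so that all the
   half-integer powers q^x appearing (q^(kH), q^(2 H (x) H), [x]_q with x
   half-integral) are integer powers of s.
   Spin j = n/2 representation V_n : basis indexed by i : 'I_n.+1,
   the i-th basis vector being |j, m> with m = j - i, so 2m = n - 2i. *)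

(* 2m for the basis vector i of spin n/2 *)
Definition wt (n : nat) (i : 'I_n.+1) : int := n%:Z - 2 * (i : nat)%:Z.

(* qbr s t = [t/2]_q = (q^(t/2) - q^(-t/2)) / (q - q^-1),  q = s^2 *)
Definition qbr (s : algC) (t : int) : algC :=
  (s ^ t - s ^ (- t)) / (s ^ 2 - s ^ (-2)).

(* Matrices (column convention: A a b = coefficient of e_a in A e_b). *)
(* E |j,m> = [j-m]_q |j,m+1>  (j - m = b) *)
Definition Emx (s : algC) (n : nat) : 'M[algC]_n.+1 :=
  \matrix_(a, b) (if (a : nat).+1 == b then qbr s (2 * (b : nat)%:Z) else 0).
(* F |j,m> = [j+m]_q |j,m-1>  (j + m = n - b) *)
Definition Fmx (s : algC) (n : nat) : 'M[algC]_n.+1 :=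
  \matrix_(a, b) (if (a : nat) == (b : nat).+1
                  then qbr s (2 * (n%:Z - (b : nat)%:Z)) else 0).
(* q^(k H) |j,m> = q^(k m) |j,m> = s^(k * 2m) |j,m> *)
Definition qkH (s : algC) (n : nat) (k : int) : 'M[algC]_n.+1 :=
  \matrix_(a, b) (if a == b then s ^ (k * wt a) else 0).

Definition op (T : finType) := T -> T -> algC.
Definition opmul (T : finType) (A B : op T) : op T :=
  fun x z => \sum_(y : T) A x y * B y z.
Definition opadd (T : finType) (A B : op T) : op T := fun x y => A x y + B x y.
Definition opscale (T : finType) (c : algC) (A : op T) : op T :=
  fun x y => c * A x y.

Definition T3 (n1 n2 n3 : nat) : finType :=
  ('I_n1.+1 * 'I_n2.+1 * 'I_n3.+1)%type.
Definition T2 (n2 n3 : nat) : finType := ('I_n2.+1 * 'I_n3.+1)%type.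

Definition tens3 n1 n2 n3 (A : 'M[algC]_n1.+1) (B : 'M[algC]_n2.+1)
  (C : 'M[algC]_n3.+1) : op (T3 n1 n2 n3) :=
  fun x y => A x.1.1 y.1.1 * B x.1.2 y.1.2 * C x.2 y.2.
Definition tens2 n2 n3 (A : 'M[algC]_n2.+1) (B : 'M[algC]_n3.+1)
  : op (T2 n2 n3) :=
  fun x y => A x.1 y.1 * B x.2 y.2.

(* coefficient of the k-th term of the universal R-matrix:
   (q - q^-1)^k / [k]_q! * q^(-k(k+1)/2) *)
Definition qfact (s : algC) (k : nat) : algC :=
  \prod_(1 <= i < k.+1) qbr s (2 * i%:Z).
Definition Rcoef (s : algC) (k : nat) : algC :=
  (s ^ 2 - s ^ (-2)) ^+ k / qfact s k * s ^ (- (k%:Z * k.+1%:Z)).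

(* R^alpha-part and R_alpha-part of the k-th term:
   X_k = F^k q^(kH),  Y_k = E^k q^(-kH);  R = sum_k c_k (X_k (x) Y_k) q^(2 H(x)H) *)
Definition Xk (s : algC) (n : nat) (k : nat) : 'M[algC]_n.+1 :=
  Fmx s n ^+ k *m qkH s n k%:Z.
Definition Yk (s : algC) (n : nat) (k : nat) : 'M[algC]_n.+1 :=
  Emx s n ^+ k *m qkH s n (- k%:Z).

Inductive pos := P1 | P2 | P3.

Definition place2 n1 n2 n3 (p r : pos)
  (A : forall n, 'M[algC]_n.+1) (B : forall n, 'M[algC]_n.+1)
  : op (T3 n1 n2 n3) :=
  match p, r with
  | P1, P2 => tens3 (A n1) (B n2) 1%:M
  | P2, P1 => tens3 (B n1) (A n2) 1%:M
  | P1, P3 => tens3 (A n1) 1%:M (B n3)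
  | P3, P1 => tens3 (B n1) 1%:M (A n3)
  | P2, P3 => tens3 1%:M (A n2) (B n3)
  | P3, P2 => tens3 1%:M (B n2) (A n3)
  | _, _ => fun _ _ => 0
  end.

Definition wt3 n1 n2 n3 (p : pos) (x : T3 n1 n2 n3) : int :=
  match p with P1 => wt x.1.1 | P2 => wt x.1.2 | P3 => wt x.2 end.

(* q^(2 H_p H_r):  eigenvalue q^(2 m_p m_r) = s^((2 m_p)(2 m_r)) *)
Definition qHH n1 n2 n3 (s : algC) (p r : pos) : op (T3 n1 n2 n3) :=
  fun x y => if x == y then s ^ (wt3 p x * wt3 r x) else 0.

(* Leg notation R_{pr}: R^alpha in leg p, R_alpha in leg r.  The series is a
   finite sum on finite-dimensional representations (F^k = 0 on V_n for
   k > n), so truncating at k <= n1+n2+n3 gives exactly its action. *)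
Definition Rleg (s : algC) n1 n2 n3 (p r : pos) : op (T3 n1 n2 n3) :=
  opmul (fun x y => \sum_(k < (n1 + n2 + n3).+1)
           Rcoef s k * @place2 n1 n2 n3 p r (fun n => Xk s n k)
                                            (fun n => Yk s n k) x y)
        (@qHH n1 n2 n3 s p r).

Definition ptrace1 n1 n2 n3 (A : op (T3 n1 n2 n3)) : op (T2 n2 n3) :=
  fun x y => \sum_(a : 'I_n1.+1) A (a, x.1, x.2) (a, y.1, y.2).

Definition trace_RRRR_mu (s : algC) (n2 n3 : nat) : op (T2 n2 n3) :=
  ptrace1 (opmul (opmul (opmul (opmul
    (@Rleg s 1 n2 n3 P2 P1) (@Rleg s 1 n2 n3 P3 P1))
    (@Rleg s 1 n2 n3 P1 P3)) (@Rleg s 1 n2 n3 P1 P2))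
    (tens3 (qkH s 1 2) 1%:M 1%:M)).

Definition DeltaE (s : algC) n2 n3 : op (T2 n2 n3) :=
  opadd (tens2 (Emx s n2) (qkH s n3 (-1))) (tens2 (qkH s n2 1) (Emx s n3)).
Definition DeltaF (s : algC) n2 n3 : op (T2 n2 n3) :=
  opadd (tens2 (Fmx s n2) (qkH s n3 (-1))) (tens2 (qkH s n2 1) (Fmx s n3)).
Definition DeltaqkH (s : algC) n2 n3 (k : int) : op (T2 n2 n3) :=
  tens2 (qkH s n2 k) (qkH s n3 k).

(* Delta(Q),  Q = (q-q^-1)^2 F E + q^(2H+1) + q^(-2H-1),
   with q^(2H+1) = q * q^(2H), q = s^2 *)
Definition DeltaQ (s : algC) n2 n3 : op (T2 n2 n3) :=
  opadd (opadd
    (opscale ((s ^ 2 - s ^ (-2)) ^+ 2) (opmul (@DeltaF s n2 n3) (@DeltaE s n2 n3)))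
    (opscale (s ^ 2) (@DeltaqkH s n2 n3 2)))
    (opscale (s ^ (-2)) (@DeltaqkH s n2 n3 (-2))).

(* Main.v *)
Require Import Defs.
From mathcomp Require Import all_boot all_order all_algebra all_field zify ring.
From Stdlib Require Import FunctionalExtensionality.
Import GRing.Theory Num.Theory.
Local Open Scope ring_scope.



Lemma sum_pair (I J : finType) (F : (I * J)%type -> algC) :
  \sum_(z : (I * J)%type) F z = \sum_(i : I) \sum_(j : J) F (i, j).
Proof. rewrite pair_bigA; apply: eq_bigr; by case. Qed.

Section Ops.
Variable T : finType.
Implicit Types A B C : op T.
Definition op0 : op T := fun _ _ => 0.

Lemma opmulDl A B C : opmul (opadd A B) C = opadd (opmul A C) (opmul B C).
Proof.
apply: functional_extensionality => x; apply: functional_extensionality => y.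
rewrite /opmul /opadd -big_split /=; apply: eq_bigr => z _; by rewrite mulrDl.
Qed.
Lemma opmulDr A B C : opmul A (opadd B C) = opadd (opmul A B) (opmul A C).
Proof.
apply: functional_extensionality => x; apply: functional_extensionality => y.
rewrite /opmul /opadd -big_split /=; apply: eq_bigr => z _; by rewrite mulrDr.
Qed.
Lemma opmulZl c A B : opmul (opscale c A) B = opscale c (opmul A B).
Proof.
apply: functional_extensionality => x; apply: functional_extensionality => y.
rewrite /opmul /opscale mulr_sumr; apply: eq_bigr => z _; by rewrite mulrA.
Qed.
Lemma opmulZr c A B : opmul A (opscale c B) = opscale c (opmul A B).
Proof.
apply: functional_extensionality => x; apply: functional_extensionality => y.
rewrite /opmul /opscale mulr_sumr; apply: eq_bigr => z _; by rewrite mulrCA.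
Qed.
Lemma opmul0l A : opmul op0 A = op0.
Proof.
apply: functional_extensionality => x; apply: functional_extensionality => y.
by rewrite /opmul /op0 big1 // => z _; rewrite mul0r.
Qed.
Lemma opmul0r A : opmul A op0 = op0.
Proof.
apply: functional_extensionality => x; apply: functional_extensionality => y.
by rewrite /opmul /op0 big1 // => z _; rewrite mulr0.
Qed.
Lemma opadd0l A : opadd op0 A = A.
Proof.
apply: functional_extensionality => x; apply: functional_extensionality => y.
by rewrite /opadd /op0 add0r.
Qed.
Lemma opadd0r A : opadd A op0 = A.
Proof.
apply: functional_extensionality => x; apply: functional_extensionality => y.
by rewrite /opadd /op0 addr0.
Qed.
End Ops.
Arguments op0 {T}.

Section Tens.
Variables n2 n3 : nat.
Lemma opmul_tens2 (A C : 'M[algC]_n2.+1) (B D : 'M[algC]_n3.+1) :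
  opmul (tens2 A B) (tens2 C D) = tens2 (A *m C) (B *m D).
Proof.
apply: functional_extensionality => x; apply: functional_extensionality => y.
rewrite /opmul /tens2 /T2 sum_pair. case: x => x1 x2; case: y => y1 y2 /=. rewrite mxE big_distrl /=; apply: eq_bigr => i _.
rewrite mxE big_distrr /=; apply: eq_bigr => j _. by rewrite mulrACA.
Qed.
Lemma tens2Zl c (A : 'M[algC]_n2.+1) (B : 'M[algC]_n3.+1) :
  tens2 (c *: A) B = opscale c (tens2 A B).
Proof.
apply: functional_extensionality => x; apply: functional_extensionality => y.
by rewrite /tens2 /opscale mxE mulrA.
Qed.
Lemma tens2Zr c (A : 'M[algC]_n2.+1) (B : 'M[algC]_n3.+1) :
  tens2 A (c *: B) = opscale c (tens2 A B).
Proof.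
apply: functional_extensionality => x; apply: functional_extensionality => y.
by rewrite /tens2 /opscale mxE mulrCA.
Qed.
End Tens.



Section Blk.
Variables n2 n3 : nat.
Notation W := (op (T2 n2 n3)).
Definition mkblk (b00 b01 b10 b11 : W) (a b : 'I_2) : W :=
  if (a : nat) == 0%N then (if (b : nat) == 0%N then b00 else b01)
  else (if (b : nat) == 0%N then b10 else b11).
Definition blk (B : 'I_2 -> 'I_2 -> W) : op (T3 1 n2 n3) :=
  fun x y => B x.1.1 y.1.1 (x.1.2, x.2) (y.1.2, y.2).

Lemma sumT3 (F : T3 1 n2 n3 -> algC) :
  \sum_(z : T3 1 n2 n3) F z = \sum_(a < 2) \sum_(w : T2 n2 n3) F (a, w.1, w.2).
Proof.
rewrite /T3 /T2 sum_pair sum_pair; apply: eq_bigr => a _.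
by rewrite sum_pair.
Qed.

Lemma sumI2 (F : 'I_2 -> algC) : \sum_(a < 2) F a = F ord0 + F (@Ordinal 2 1 isT).
Proof. rewrite big_ord_recl big_ord1; congr (_ + F _); exact: val_inj. Qed.

Lemma blk_mul a00 a01 a10 a11 b00 b01 b10 b11 :
  opmul (blk (mkblk a00 a01 a10 a11)) (blk (mkblk b00 b01 b10 b11)) =
  blk (mkblk (opadd (opmul a00 b00) (opmul a01 b10))
             (opadd (opmul a00 b01) (opmul a01 b11))
             (opadd (opmul a10 b00) (opmul a11 b10))
             (opadd (opmul a10 b01) (opmul a11 b11))).
Proof.
apply: functional_extensionality => x; apply: functional_extensionality => y.
rewrite /opmul /blk sumT3 sumI2 /opadd /opmul /=.
case: x => [[[[|[|//]] ha] i2] i3]; case: y => [[[[|[|//]] hb] j2] j3] /=;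
  rewrite /mkblk /= /T2 ?sum_pair //.
Qed.

Lemma ptrace_blk b00 b01 b10 b11 (x y : T2 n2 n3) :
  ptrace1 (blk (mkblk b00 b01 b10 b11)) x y = opadd b00 b11 x y.
Proof.
rewrite /ptrace1 sumI2 /blk /mkblk /opadd /=.
by case: x => x1 x2; case: y => y1 y2.
Qed.
End Blk.
Arguments mkblk {n2 n3}.
Arguments blk {n2 n3}.



Lemma sum01 M (f : nat -> algC) : (2 <= M)%N -> (forall k, (2 <= k)%N -> f k = 0) ->
  \sum_(k < M) f k = f 0%N + f 1%N.
Proof.
case: M => [|[|M]] // _ H; rewrite !big_ord_recl big1 ?addr0 //= => i _.
by apply: H.
Qed.

Lemma opmul_qHH n1 n2 n3 s p r (A : op (T3 n1 n2 n3)) x y :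
  opmul A (@qHH n1 n2 n3 s p r) x y = A x y * s ^ (wt3 p y * wt3 r y).
Proof.
rewrite /opmul /qHH (bigD1 y) //= eqxx big1 ?addr0 // => z /negbTE ->.
by rewrite mulr0.
Qed.

Section S.
Variable s : algC.
Hypothesis hs0 : s != 0.
Hypothesis h4 : s ^ 2 - s ^ (-2) != 0.

Lemma qkH0 n : qkH s n 0 = 1%:M.
Proof. apply/matrixP => i j; rewrite !mxE mul0r expr0z; by case: eqP. Qed.

Lemma mul_qkH n k (A : 'M[algC]_n.+1) i j :
  (A *m qkH s n k) i j = A i j * s ^ (k * wt j).
Proof.
rewrite mxE (bigD1 j) //= mxE eqxx big1 ?addr0 // => z /negbTE nz.
by rewrite mxE nz mulr0.
Qed.

Lemma Xk0 n : Xk s n 0 = 1%:M.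
Proof. by rewrite /Xk expr0 qkH0 mulmx1. Qed.
Lemma Yk0 n : Yk s n 0 = 1%:M.
Proof. by rewrite /Yk expr0 oppr0 qkH0 mulmx1. Qed.
Lemma Xk1 n : Xk s n 1 = Fmx s n *m qkH s n 1.
Proof. by rewrite /Xk expr1. Qed.
Lemma Yk1 n : Yk s n 1 = Emx s n *m qkH s n (-1).
Proof. by rewrite /Yk expr1. Qed.

Lemma qbr2 : qbr s 2 = 1.
Proof. by rewrite /qbr divff. Qed.

Lemma F1sq : Fmx s 1 * Fmx s 1 = 0.
Proof.
apply/matrixP => i j; rewrite -mulmxE !mxE big1 // => k _; rewrite !mxE.
case: i j k => [[|[|//]] ?] [[|[|//]] ?] [[|[|//]] ?]; by rewrite /= ?mul0r ?mulr0.
Qed.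
Lemma E1sq : Emx s 1 * Emx s 1 = 0.
Proof.
apply/matrixP => i j; rewrite -mulmxE !mxE big1 // => k _; rewrite !mxE.
case: i j k => [[|[|//]] ?] [[|[|//]] ?] [[|[|//]] ?]; by rewrite /= ?mul0r ?mulr0.
Qed.

Lemma Xk1big k : (2 <= k)%N -> Xk s 1 k = 0.
Proof.
case: k => [|[|k]] // _; rewrite /Xk !exprS mulrA F1sq !mul0r.
by rewrite mul0mx.
Qed.
Lemma Yk1big k : (2 <= k)%N -> Yk s 1 k = 0.
Proof.
case: k => [|[|k]] // _; rewrite /Yk !exprS mulrA E1sq !mul0r.
by rewrite mul0mx.
Qed.

Definition c1 := (s ^ 2 - s ^ (-2)) * s ^ (-2).
Lemma Rcoef0 : Rcoef s 0 = 1.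
Proof. by rewrite /Rcoef /qfact big_geq // expr0 mul0r oppr0 expr0z divr1 mul1r. Qed.
Lemma Rcoef1 : Rcoef s 1 = c1.
Proof.
by rewrite /Rcoef /qfact big_nat1 /= expr1 qbr2 divr1 mul1r. Qed.
Lemma wt10 h : wt (@Ordinal 2 0 h) = 1. Proof. by []. Qed.
Lemma wt11 h : wt (@Ordinal 2 1 h) = -1. Proof. by []. Qed.

Variables n2 n3 : nat.
Ltac finR i j :=
  rewrite ?mul_qkH ?wt10 ?wt11 !mxE /=;
  rewrite ?qbr2 ?mul0r ?mulr0 ?add0r ?addr0 ?mul1r ?mulr1 ?mulN1r ?mulrN1 ?opprK -?invr_expz;
  rewrite ?expr1z ?mul0r; try (case: (i =P j) => [->|_]); rewrite ?mul0r ?mulr0 ?mul1r ?mulr1 //;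
  field; by rewrite ?expfz_neq0.

Ltac startR p r :=
  let x := fresh "x" in let y := fresh "y" in
  apply functional_extensionality; intro x; apply functional_extensionality; intro y;
  rewrite /Rleg opmul_qHH (@sum01 _ (fun k => Rcoef s k * @place2 1 n2 n3 p r (fun n => Xk s n k) (fun n => Yk s n k) x y));
  [ | by lia
  | by move=> k hk; rewrite /place2 /tens3 ?Yk1big ?Xk1big // mxE !mul0r ?mulr0];
  rewrite /= Rcoef0 Rcoef1 !Xk0 !Yk0 !Xk1 !Yk1 /tens3 /blk /mkblk /tens2 /op0 /opscale;
  case: x => [[[[|[|//]] ha] i2] i3]; case: y => [[[[|[|//]] hb] j2] j3] /=.

Lemma R21E : @Rleg s 1 n2 n3 P2 P1 =
  blk (mkblk (tens2 (qkH s n2 1) 1%:M) (opscale (c1 * s) (tens2 (Fmx s n2) 1%:M))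
             op0 (tens2 (qkH s n2 (-1)) 1%:M)).
Proof. startR P2 P1.
all: rewrite ?mul_qkH ?wt10 ?wt11 !mxE /=.
all: rewrite ?qbr2 ?mul0r ?mulr0 ?add0r ?addr0 ?mul1r ?mulr1 ?mulN1r ?mulrN1 ?opprK -?invr_expz.
all: rewrite ?expr1z ?mul0r; try (case: (i2 =P j2) => [->|_]); rewrite ?mul0r ?mulr0 ?mul1r ?mulr1 //.
all: field; by rewrite ?expfz_neq0.
Qed.

Lemma R31E : @Rleg s 1 n2 n3 P3 P1 =
  blk (mkblk (tens2 1%:M (qkH s n3 1)) (opscale (c1 * s) (tens2 1%:M (Fmx s n3)))
             op0 (tens2 1%:M (qkH s n3 (-1)))).
Proof. startR P3 P1.
all: rewrite ?mul_qkH ?wt10 ?wt11 !mxE /=.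
all: rewrite ?qbr2 ?mul0r ?mulr0 ?add0r ?addr0 ?mul1r ?mulr1 ?mulN1r ?mulrN1 ?opprK -?invr_expz.
all: rewrite ?expr1z ?mul0r; try (case: (i3 =P j3) => [->|_]); rewrite ?mul0r ?mulr0 ?mul1r ?mulr1 //.
all: field; by rewrite ?expfz_neq0.
Qed.

Lemma R13E : @Rleg s 1 n2 n3 P1 P3 =
  blk (mkblk (tens2 1%:M (qkH s n3 1)) op0 (opscale (c1 * s) (tens2 1%:M (Emx s n3)))
             (tens2 1%:M (qkH s n3 (-1)))).
Proof. startR P1 P3.
all: rewrite ?mul_qkH ?wt10 ?wt11 !mxE /=.
all: rewrite ?qbr2 ?mul0r ?mulr0 ?add0r ?addr0 ?mul1r ?mulr1 ?mulN1r ?mulrN1 ?opprK -?invr_expz.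
all: rewrite ?expr1z ?mul0r; try (case: (i3 =P j3) => [->|_]); rewrite ?mul0r ?mulr0 ?mul1r ?mulr1 //.
all: field; by rewrite ?expfz_neq0.
Qed.

Lemma R12E : @Rleg s 1 n2 n3 P1 P2 =
  blk (mkblk (tens2 (qkH s n2 1) 1%:M) op0 (opscale (c1 * s) (tens2 (Emx s n2) 1%:M))
             (tens2 (qkH s n2 (-1)) 1%:M)).
Proof. startR P1 P2.
all: rewrite ?mul_qkH ?wt10 ?wt11 !mxE /=.
all: rewrite ?qbr2 ?mul0r ?mulr0 ?add0r ?addr0 ?mul1r ?mulr1 ?mulN1r ?mulrN1 ?opprK -?invr_expz.
all: rewrite ?expr1z ?mul0r; try (case: (i2 =P j2) => [->|_]); rewrite ?mul0r ?mulr0 ?mul1r ?mulr1 //.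
all: field; by rewrite ?expfz_neq0.
Qed.

Lemma muE : tens3 (qkH s 1 2) (1%:M : 'M_n2.+1) (1%:M : 'M_n3.+1) =
  blk (mkblk (opscale (s ^ 2) (tens2 1%:M 1%:M)) op0 op0 (opscale (s ^ (-2)) (tens2 1%:M 1%:M))).
Proof.
apply: functional_extensionality => x; apply: functional_extensionality => y.
rewrite /tens3 /blk /mkblk /tens2 /op0 /opscale.
case: x => [[[[|[|//]] ha] i2] i3]; case: y => [[[[|[|//]] hb] j2] j3] /=;
  rewrite !mxE /= ?mulr0 ?mul0r ?mulr1 ?mul1r ?wt11 ?mulrN1 -?mulrA //.
Qed.
End S.



Lemma qkH_mul s n k l : s != 0 -> qkH s n k *m qkH s n l = qkH s n (k + l).
Proof.
move=> hs; apply/matrixP => i j; rewrite mul_qkH !mxE.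
case: eqP => [->|_]; rewrite ?mul0r // mulrDl expfzDr //.
Qed.

Theorem corollary5p5 (s : algC) (hs0 : s != 0)
  (hgen : forall k : nat, (0 < k)%N -> s ^+ k != 1)
  (n2 n3 : nat) (x y : T2 n2 n3) :
  @trace_RRRR_mu s n2 n3 x y = @DeltaQ s n2 n3 x y.
Proof.
have h4 : s ^ 2 - s ^ (-2) != 0.
  apply/negP; rewrite subr_eq0 => /eqP H.
  have h2 : s ^ 2 = s ^+ 2 by [].
  move: (hgen 4%N isT); rewrite -invr_expz h2 in H.
  have -> : s ^+ 4 = s ^+ 2 * s ^+ 2 by rewrite -exprD.
  by rewrite {1}H mulVf ?expf_neq0 ?eqxx.
rewrite /trace_RRRR_mu (@R21E s hs0 h4) (@R31E s hs0 h4) (@R13E s hs0 h4) (@R12E s hs0 h4) muE.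
rewrite !blk_mul ptrace_blk /DeltaQ /DeltaF /DeltaE /DeltaqkH.
rewrite !(opmulDl, opmulDr, opmulZl, opmulZr, opmul0l, opmul0r, opadd0l, opadd0r, opmul_tens2, mulmx1, mul1mx, tens2Zl, tens2Zr).
rewrite !qkH_mul //.
have -> : (1 + 1 : int) = 2 by [].
have -> : (-1 - 1 : int) = -2 by [].
rewrite /opadd /opscale /op0 /c1.
rewrite -!invr_expz.
have -> : s ^ 2 = s ^+ 2 by [].
by field.
Qed.
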